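(* Let $D$ be a square-free integer, let $\mathbb{Z}[\sqrt{D}]$ denote the ring of integers of $\mathbb{Q}(\sqrt{D})$, and let $p$ be a prime integer which is irreducible but not prime in $\mathbb{Z}[\sqrt{D}]$. Let $z\in I_p(D)$ with $\lVert z\rVert=-p^2$. Then $A(p,z)$ has property (CZ), i.e. there exist $a,b,c\in\mathbb{Z}[\sqrt{D}]$ with $a(1-a)=bc$ such that $A(p,z)=\begin{pmatrix} a&b\\ c&1-a\end{pmatrix}\begin{pmatrix}\bar a&\bar c\\ \bar b&1-\bar a\end{pmatrix}$.
   Context: $\mathbb{Z}[\sqrt{D}]=\{a+b\sqrt{D}:a,b\in\mathbb{Z}\}$ if $D\equiv 2,3 \pmod 4$ and $\{\frac{a+b\sqrt{D}}{2}:a,b\in\mathbb{Z},a\equiv b \pmod 2\}$ if $D\equiv 1\pmod 4$. $\bar z$ denotes the conjugate and $\lVert z\rVert=z\bar z$ the norm. $I_p(D)$ is the set of all non-unit $z\in\mathbb{Z}[\sqrt{D}]$ such that $z\notin\langle p\rangle$ but there exists $m\notin\langle p\rangle$ with $zm\in\langle p\rangle$. $A(p,z)=\begin{pmatrix} p & z\\ \bar z & \lVert z\rVert/p\end{pmatrix}$. *)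

(* Defs.v *)
From mathcomp Require Import all_boot all_order all_algebra.
Set Implicit Arguments. Unset Strict Implicit. Unset Printing Implicit Defensive.
Import Order.TTheory GRing.Theory Num.Theory.
Local Open Scope ring_scope.

(* The ring of integers O_D of Q(sqrt D), D square-free, D <> 1.
   An element is represented by its coordinates (x, y) in the Z-basis
   {1, w}, where w = sqrt D if D = 2,3 mod 4 and w = (1 + sqrt D)/2 if
   D = 1 mod 4.  In both cases w^2 = s + t w with
     (s, t) = (D, 0)            if D <> 1 mod 4,
     (s, t) = ((D - 1)/4, 1)    if D = 1 mod 4,
   and the Galois conjugate of w is t - w. *)
Record zd := ZD { zre : int; zom : int }.

Definition d1mod4 (D : int) : bool := (D %% 4)%Z == 1.
Definition ws (D : int) : int := if d1mod4 D then ((D - 1) %/ 4)%Z else D.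
Definition wt (D : int) : int := if d1mod4 D then 1 else 0.

Definition zd_of_int (n : int) : zd := ZD n 0.
Definition zd0 : zd := ZD 0 0.
Definition zd1 : zd := ZD 1 0.
Definition zd_add (u v : zd) : zd := ZD (zre u + zre v) (zom u + zom v).
Definition zd_opp (u : zd) : zd := ZD (- zre u) (- zom u).
Definition zd_mul (D : int) (u v : zd) : zd :=
  ZD (zre u * zre v + zom u * zom v * ws D)
     (zre u * zom v + zom u * zre v + zom u * zom v * wt D).
Definition zd_conj (D : int) (u : zd) : zd := ZD (zre u + zom u * wt D) (- zom u).
(* the norm ||z|| = z * \bar z (an integer) *)
Definition zd_norm (D : int) (u : zd) : int :=
  zre u ^+ 2 + zre u * zom u * wt D - zom u ^+ 2 * ws D.

Definition squarefree_int (D : int) : Prop :=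
  forall k : nat, (1 < k)%N -> ~~ ((k%:Z ^+ 2) %| D)%Z.

Definition zd_unit (D : int) (u : zd) : Prop := exists w, zd_mul D u w = zd1.
Definition in_ideal (D : int) (a u : zd) : Prop := exists w, u = zd_mul D a w.

Definition zd_irreducible (D : int) (a : zd) : Prop :=
  a <> zd0 /\ ~ zd_unit D a /\
  forall x y, a = zd_mul D x y -> zd_unit D x \/ zd_unit D y.
Definition zd_prime (D : int) (a : zd) : Prop :=
  a <> zd0 /\ ~ zd_unit D a /\
  forall x y, in_ideal D a (zd_mul D x y) -> in_ideal D a x \/ in_ideal D a y.

Definition I_p (D : int) (p : nat) (z : zd) : Prop :=
  ~ zd_unit D z /\ ~ in_ideal D (zd_of_int p%:Z) z /\
  exists m, ~ in_ideal D (zd_of_int p%:Z) m /\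
            in_ideal D (zd_of_int p%:Z) (zd_mul D z m).

Record mat2 := Mat2 { m11 : zd; m12 : zd; m21 : zd; m22 : zd }.
Definition mat2_mul (D : int) (M N : mat2) : mat2 :=
  Mat2 (zd_add (zd_mul D (m11 M) (m11 N)) (zd_mul D (m12 M) (m21 N)))
       (zd_add (zd_mul D (m11 M) (m12 N)) (zd_mul D (m12 M) (m22 N)))
       (zd_add (zd_mul D (m21 M) (m11 N)) (zd_mul D (m22 M) (m21 N)))
       (zd_add (zd_mul D (m21 M) (m12 N)) (zd_mul D (m22 M) (m22 N))).

(* A(p,z) = [[p, z], [\bar z, ||z||/p]]  (||z||/p is exact division here) *)
Definition A_mat (D : int) (p : nat) (z : zd) : mat2 :=
  Mat2 (zd_of_int p%:Z) z (zd_conj D z) (zd_of_int (zd_norm D z %/ p%:Z)%Z).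

Definition has_CZ (D : int) (M : mat2) : Prop :=
  exists a b c : zd,
    zd_mul D a (zd_add zd1 (zd_opp a)) = zd_mul D b c /\
    M = mat2_mul D (Mat2 a b c (zd_add zd1 (zd_opp a)))
                   (Mat2 (zd_conj D a) (zd_conj D c) (zd_conj D b)
                         (zd_add zd1 (zd_opp (zd_conj D a)))).

(* Main.v *)
Require Import Defs.
From mathcomp Require Import all_boot all_order all_algebra.
From mathcomp Require Import ring lra zify.
Import GRing.Theory Num.Theory.
Local Open Scope ring_scope.

Lemma comb (L R e1 e2 W1 W2 : int) : e1 = 0 -> e2 = 0 -> L = R + e1*W1 + e2*W2 -> L = R.
Proof. by move=> -> -> ->; rewrite !mul0r !addr0. Qed.

Lemma ts_cases D : (wt D = 0 /\ ws D = D /\ (D %% 4)%Z != 1) \/ (wt D = 1 /\ D = 1 + 4 * ws D).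
Proof.
rewrite /wt /ws /d1mod4; case: ifP => h; last by left; split => //; split => //; apply/negbT.
right; split => //.
have hD := divz_eq D 4; rewrite (eqP h) in hD.
have -> : D - 1 = (D %/ 4)%Z * 4 by rewrite {1}hD; ring.
rewrite mulzK //; rewrite {1}hD; ring.
Qed.

Lemma nin_dvd D (p : nat) x y : ~ in_ideal D (zd_of_int p%:Z) (ZD x y) ->
  ~ ((p%:Z %| x)%Z /\ (p%:Z %| y)%Z).
Proof.
move=> hn [/dvdzP [a ha] /dvdzP [b hb]]; apply: hn; exists (ZD a b).
rewrite /zd_mul /zd_of_int /= ha hb; congr ZD; ring.
Qed.

Lemma p2t0_id (q d j e k f : int) : e ^+ 2 - d * f ^+ 2 =
  4 * (-1 - j ^+ 2 - j * e + q * (k * 2 + f) ^+ 2 + d * (k ^+ 2 + k * f)) +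
  ((j * 2 + e) ^+ 2 - (k * 2 + f) ^+ 2 * (q * 4 + d) + 4) * 1 + 
  0 * 0.
Proof. ring. Qed.

Lemma p2t0 D x y : squarefree_int D -> (D %% 4)%Z != 1 ->
  ~ ((2%:Z %| x)%Z /\ (2%:Z %| y)%Z) ->
  x ^+ 2 - y ^+ 2 * D = - 4 -> False.
Proof.
move=> hsq hd hnd hN.
have hD : D = (D %/ 4)%Z * 4 + (D %% 4)%Z := divz_eq D 4.
have hx : x = (x %/ 2)%Z * 2 + (x %% 2)%Z := divz_eq x 2.
have hy : y = (y %/ 2)%Z * 2 + (y %% 2)%Z := divz_eq y 2.
set q := (D %/ 4)%Z in hD; set d := (D %% 4)%Z in hD hd.
set j := (x %/ 2)%Z in hx; set e := (x %% 2)%Z in hx.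
set k := (y %/ 2)%Z in hy; set f := (y %% 2)%Z in hy.
have d0 : 0 <= d by apply: modz_ge0.
have d4 : d < 4 by apply: ltz_pmod.
have e0 : 0 <= e by apply: modz_ge0.
have e2 : e < 2 by apply: ltz_pmod.
have f0 : 0 <= f by apply: modz_ge0.
have f2 : f < 2 by apply: ltz_pmod.
clearbody q d j e k f.
have hN' : (j * 2 + e) ^+ 2 - (k * 2 + f) ^+ 2 * (q * 4 + d) = -4 by rewrite -hx -hy -hD.
have E : e ^+ 2 - d * f ^+ 2 = 4 * (-1 - j ^+ 2 - j * e + q * (k * 2 + f) ^+ 2 + d * (k ^+ 2 + k * f)).
  apply: (@comb _ _ ((j * 2 + e) ^+ 2 - (k * 2 + f) ^+ 2 * (q * 4 + d) + 4) 0 1 0); first by rewrite hN'; ring.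
    by [].
  exact: p2t0_id.
move: E; set W := (-1 - _ + _ + _).
have [?|?] : e = 0 \/ e = 1 by lia.
all: have [?|?] : f = 0 \/ f = 1 by lia.
all: subst e f.
- move=> _; apply: hnd; split; apply/dvdzP; [exists j | exists k]; by rewrite ?hx ?hy; ring.
- have [?|[?|[?|?]]] : d = 0 \/ d = 1 \/ d = 2 \/ d = 3 by lia.
  + subst d; move=> _; have := hsq 2%N isT; rewrite hD => /negP; apply; apply/dvdzP; exists q; ring.
  + by subst d; rewrite eqxx in hd.
  + lia.
  + lia.
- lia.
- have [?|[?|[?|?]]] : d = 0 \/ d = 1 \/ d = 2 \/ d = 3 by lia.
  + subst d; move=> _; have := hsq 2%N isT; rewrite hD => /negP; apply; apply/dvdzP; exists q; ring.
  + by subst d; rewrite eqxx in hd.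
  + lia.
  + lia.
Qed.

Lemma prime_dvdz_or (p : nat) (u : int) : prime p ->
  coprimez p%:Z u \/ (p%:Z %| u)%Z.
Proof.
move=> hp; rewrite coprimezE /= prime_coprime //.
by case: (boolP (p %| `|u|)%N) => h; [right | left].
Qed.

Lemma claim (D s t u : int) (p : nat) : prime p -> squarefree_int D ->
  ((t = 0 /\ s = D /\ p != 2%N) \/ (t = 1 /\ D = 1 + 4 * s)) ->
  (p%:Z ^+ 2 %| (t ^+ 2 + 4 * s) * u ^+ 2)%Z -> (p%:Z %| u)%Z.
Proof.
move=> hp hsq hts hd.
have [cop|//] := @prime_dvdz_or p u hp.
exfalso.
have cop2 : coprimez (p%:Z ^+ 2) (u ^+ 2) by apply: coprimezXl; apply: coprimezXr.
rewrite Gauss_dvdzl // in hd.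
have hnd := hsq p (prime_gt1 hp).
suff : (p%:Z ^+ 2 %| D)%Z by rewrite (negbTE hnd).
case: hts hd => [[-> [-> hp2]] | [-> ->]] hd; last first.
  by move: hd; rewrite expr1n.
have c4 : coprimez (p%:Z ^+ 2) 4.
  apply: coprimezXl; rewrite coprimezE /= prime_coprime //; apply/negP => h4.
  have := dvdn_leq (isT : (0 < 4)%N) h4; clear -hp hp2 h4; move: hp hp2 h4.
  by case: p => [|[|[|[|[|]]]]].
move: hd; have -> : (0 ^+ 2 + 4 * D) = 4 * D by ring.
by rewrite Gauss_dvdzr.
Qed.

Lemma exists_r (D : int) (p : nat) (x y : int) :
  squarefree_int D -> prime p ->
  ~ in_ideal D (zd_of_int p%:Z) (ZD x y) ->
  x ^+ 2 + x * y * wt D - y ^+ 2 * ws D = - (p%:Z ^+ 2) ->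
  exists m n : int, m * (2 * x + y * wt D) + n * (wt D * x - 2 * y * ws D) = 1 - p%:Z.
Proof.
move=> hsq hp hnin hN.
have hnd := @nin_dvd D p x y hnin.
have hts := ts_cases D.
move: hN hts; move: (wt D) (ws D) => t s hN hts.
have hts' : (t = 0 /\ s = D /\ p != 2%N) \/ (t = 1 /\ D = 1 + 4 * s).
  case: hts => [[ht [hs hd]] | ]; last by right.
  left; split => //; split => //; apply/eqP => hp2.
  subst t s p; apply: (@p2t0 D x y hsq hd hnd); rewrite -hN; ring.
set A := 2 * x + y * t; set B := t * x - 2 * y * s.
have hpg : ~ ((p%:Z %| A)%Z /\ (p%:Z %| B)%Z).
  move=> [/dvdzP [a ha] /dvdzP [b hb]]; apply: hnd; split.
    apply: (@claim D s t x p hp hsq hts'); apply/dvdzP; exists (b ^+ 2 - 4 * s).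
    apply: (@comb _ _ (x ^+ 2 + x * y * t - y ^+ 2 * s + p%:Z ^+ 2) (B - b * p%:Z) (4 * s) (B + b * p%:Z)).
    - by rewrite hN; ring.
    - by rewrite hb; ring.
    - rewrite /B; ring.
  apply: (@claim D s t y p hp hsq hts'); apply/dvdzP; exists (a ^+ 2 + 4).
  apply: (@comb _ _ (x ^+ 2 + x * y * t - y ^+ 2 * s + p%:Z ^+ 2) (A - a * p%:Z) (- 4) (A + a * p%:Z)).
  - by rewrite hN; ring.
  - by rewrite ha; ring.
  - rewrite /A; ring.
set g := gcdz A B.
have gA : (g %| A)%Z := dvdz_gcdl A B.
have gB : (g %| B)%Z := dvdz_gcdr A B.
have g2 : (g %| 2 * p%:Z ^+ 2)%Z.
  move/dvdzP: gA => [a ha]; move/dvdzP: gB => [b hb].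
  have hxy : x * A + y * B = 2 * (x ^+ 2 + x * y * t - y ^+ 2 * s) by rewrite /A /B; ring.
  rewrite hN ha hb in hxy.
  apply/dvdzP; exists (- (x * a + y * b)).
  apply: (@comb _ _ (x * (a * g) + y * (b * g) + 2 * p%:Z ^+ 2) 0 1 0).
  - by rewrite hxy; ring.
  - by [].
  - ring.
have cgP : coprimez g p%:Z.
  rewrite coprimez_sym; have [//|hpg'] := @prime_dvdz_or p g hp.
  by exfalso; apply: hpg; split; [exact: (@dvdz_trans g p%:Z A hpg' gA) | exact: (@dvdz_trans g p%:Z B hpg' gB)].
have cgP2 : coprimez g (p%:Z ^+ 2) by apply: coprimezXr.
rewrite Gauss_dvdzl // in g2.
have g1p : (g %| 1 - p%:Z)%Z.
  case: (even_prime hp) => [hp2 | hodd].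
    subst p; rewrite (_ : 2 = 1 * 2%:Z) // Gauss_dvdzl // in g2.
  have hpe : p%:Z = 2 * (p./2)%:Z + 1.
    rewrite -{1}(odd_double_half p) hodd -muln2 /=; lia.
  rewrite hpe (_ : 1 - (2 * (p./2)%:Z + 1) = 2 * (- (p./2)%:Z)); last by ring.
  exact: dvdz_mulr.
have [u [v huv]] := Bezoutz A B.
move/dvdzP: g1p => [k hk].
exists (k * u), (k * v).
rewrite hk /g -huv; ring.
Qed.

Theorem theorem3p6 (D : int) (p : nat) (z : zd) :
  squarefree_int D -> D != 1 ->
  prime p ->
  zd_irreducible D (zd_of_int p%:Z) -> ~ zd_prime D (zd_of_int p%:Z) ->
  I_p D p z -> zd_norm D z = - (p%:Z ^+ 2) ->
  has_CZ D (A_mat D p z).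
Proof.
move=> hsq hD1 hp _ _ [_ [hnin _]].
case: z hnin => x y hnin hN.
have [m [n hT]] := @exists_r D p x y hsq hp hnin hN.
have hdiv : (zd_norm D (ZD x y) %/ p%:Z)%Z = - p%:Z.
  rewrite hN expr2 -mulNr mulzK //.
  by rewrite eqz_nat -lt0n prime_gt0.
rewrite /has_CZ /A_mat hdiv.
exists (zd_add zd1 (zd_opp (zd_mul D (zd_conj D (ZD x y)) (ZD m n)))).
exists (zd_mul D (zd_of_int p%:Z) (ZD m n)).
exists (zd_add (zd_conj D (ZD x y)) (zd_opp (zd_mul D (zd_of_int p%:Z) (zd_conj D (ZD m n))))).
move: hN hT; rewrite /zd_norm /mat2_mul /zd_mul /zd_add /zd_opp /zd_conj /zd_of_int /zd1 /=.
move: (wt D) (ws D) (p%:Z) => t s P hN hT.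
have h1 : x ^+ 2 + x * y * t - y ^+ 2 * s + P ^+ 2 = 0 by rewrite hN; ring.
have h2 : m * (2 * x + y * t) + n * (t * x - 2 * y * s) - 1 + P = 0 by rewrite hT; ring.
set Nr := m ^+ 2 + m * n * t - n ^+ 2 * s.
set u1 := (x + y * t) * m - y * n * s.
set u2 := x * n - y * m.
split.
  congr ZD.
    by apply: (@comb _ _ _ _ (Nr) (- u1) h1 h2); rewrite /Nr /u1; ring.
  by apply: (@comb _ _ _ _ (0) (- u2) h1 h2); rewrite /Nr /u2; ring.
congr Mat2; congr ZD.
- by apply: (@comb _ _ _ _ (- Nr) (1) h1 h2); rewrite /Nr; ring.
- by apply: (@comb _ _ _ _ (0) (0) h1 h2); ring.
- by apply: (@comb _ _ _ _ (m) (- P * m) h1 h2); ring.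
- by apply: (@comb _ _ _ _ (n) (- P * n) h1 h2); ring.
- by apply: (@comb _ _ _ _ (m + n * t) (- P * (m + n * t)) h1 h2); ring.
- by apply: (@comb _ _ _ _ (- n) (P * n) h1 h2); ring.
- by apply: (@comb _ _ _ _ (- (1 + Nr)) (P) h1 h2); rewrite /Nr; ring.
- by apply: (@comb _ _ _ _ (0) (0) h1 h2); ring.
Qed.
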